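(* Let $\mathcal{H}=\bigotimes_{a=1}^N\mathcal{H}_a$ be finite-dimensional, $\mathcal{N}=\{\mathcal{N}_k\}$ a non-trivial neighborhood structure, and $\Phi_{\mathcal{N}}$ the quasi-local projector defined below. For any $\rho,\sigma\in\mathcal{D}(\mathcal{H})$, one has $\rho_{\mathcal{N}_k}=\sigma_{\mathcal{N}_k}$ for all $\mathcal{N}_k\in\mathcal{N}$ if and only if $\Phi_{\mathcal{N}}(\sigma)=\Phi_{\mathcal{N}}(\rho)$.
   Context: $\mathcal{D}(\mathcal{H})$ is the set of density operators; $\mathcal{B}(\mathcal{H})$ the space of linear operators. A neighborhood is $\mathcal{N}_k\subsetneq\{1,\dots,N\}$ with complement $\overline{\mathcal{N}}_k$; a neighborhood structure is a finite collection of neighborhoods, non-trivial if every index lies in some neighborhood and each neighborhood intersects another. $\rho_{\mathcal{N}_k}=\mathrm{tr}_{\overline{\mathcal{N}}_k}\rho$. For each $a$ fix an orthonormal (Hilbert–Schmidt) basis of Hermitian operators on $\mathcal{H}_a$ consisting of the (normalized) identity $I_a$ and traceless Hermitian operators $X^a_{i_a}$, $i_a=1,\dots,d_a^2-1$; let $\mathcal{X}$ be the orthonormal product basis of $\mathcal{B}(\mathcal{H})$ formed by all $N$-fold tensor products. For $X_i\in\mathcal{X}$ let $\Phi_{X_i}(M)=\mathrm{tr}(X_iM)X_i$. Let $\mathcal{X}_{\mathcal{N}_k}$ be the set of $X_i\in\mathcal{X}$ of the form $X^i_{\mathcal{N}_k}\otimes I_{\overline{\mathcal{N}}_k}$ (identity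 factors outside $\mathcal{N}_k$), $\mathcal{X}_{\mathcal{N}}=\bigcup_k\mathcal{X}_{\mathcal{N}_k}$, and $\Phi_{\mathcal{N}}=\sum_{X_i\in\mathcal{X}_{\mathcal{N}}}\Phi_{X_i}$. *)

(* Defs.v *)
From HB Require Import structures.
From mathcomp Require Import all_boot all_order all_algebra.
Set Implicit Arguments. Unset Strict Implicit. Unset Printing Implicit Defensive.
Import Order.TTheory GRing.Theory Num.Theory.
Local Open Scope ring_scope.

Section QuasiLocal.
Variable C : numClosedFieldType.
Variable N : nat.
Variable d : 'I_N -> nat.   (* d a = dim H_a, sites a = 0..N-1 *)

(* computational basis configurations of H = ⊗_a H_a *)
Definition cfg := {dffun forall a : 'I_N, 'I_(d a)}.
(* linear operators on H, as matrices indexed by configurations *)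
Definition op := cfg -> cfg -> C.

Definition optrace (A : op) : C := \sum_(x : cfg) A x x.
Definition hermitian (A : op) : Prop := forall x y, A y x = (A x y)^*.
Definition psd (A : op) : Prop :=
  forall v : cfg -> C, 0 <= \sum_(x : cfg) \sum_(y : cfg) (v x)^* * A x y * v y.
Definition density (A : op) : Prop := [/\ hermitian A, psd A & optrace A = 1].

Definition glue (S : {set 'I_N}) (x z : cfg) : cfg :=
  [ffun a => if a \in S then x a else z a].

(* reduced operator rho_S = tr_{complement of S} rho, whose matrix entry
   <x_S| rho_S |y_S> is recorded at (x, y) (it depends only on x|_S, y|_S):
   sum over the complement configurations z|_{S^c}. *)
Definition reduced (S : {set 'I_N}) (A : op) : op := fun x y =>
  \sum_(z : cfg | [forall a, (a \in S) ==> (z a == x a)])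
     A (glue S x z) (glue S y z).

Definition adjmx n (M : 'M[C]_n) : 'M[C]_n := map_mx (fun z => z^*) M^T.

Variable B : forall a : 'I_N, 'I_(d a ^ 2) -> 'M[C]_(d a).

Definition local_onb (a : 'I_N) : Prop :=
  [/\ forall i : 'I_(d a ^ 2), val i = 0%N -> B i = (sqrtC ((d a)%:R))^-1 *: 1%:M,
      forall i : 'I_(d a ^ 2), val i <> 0%N -> \tr (B i) = 0,
      forall i : 'I_(d a ^ 2), adjmx (B i) = B i
    & forall i j : 'I_(d a ^ 2), \tr (adjmx (B i) *m B j) = (i == j)%:R].

Definition midx := {dffun forall a : 'I_N, 'I_(d a ^ 2)}.
Definition prodX (i : midx) : op := fun x y => \prod_(a : 'I_N) B (i a) (x a) (y a).

(* X_i belongs to X_{N_k}: identity factors outside N_k *)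
Definition in_nb (S : {set 'I_N}) (i : midx) : bool :=
  [forall a, (a \notin S) ==> (val (i a) == 0%N)].
Definition inXN (NS : {set {set 'I_N}}) (i : midx) : bool :=
  [exists S in NS, in_nb S i].

Definition trmul (X M : op) : C := \sum_(x : cfg) \sum_(y : cfg) X x y * M y x.

Definition PhiN (NS : {set {set 'I_N}}) (M : op) : op := fun x y =>
  \sum_(i : midx | inXN NS i) trmul (prodX i) M * prodX i x y.

End QuasiLocal.

Definition neighborhood_structure N (NS : {set {set 'I_N}}) : Prop :=
  forall S, S \in NS -> S \proper [set: 'I_N].

Definition nontrivial_ns N (NS : {set {set 'I_N}}) : Prop :=
  (forall a : 'I_N, exists2 S, S \in NS & a \in S) /\
  (forall S, S \in NS -> exists2 S', S' \in NS & (S' != S) && (S :&: S' != set0)).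

(* Main.v *)
Require Import Defs.
From HB Require Import structures.
From mathcomp Require Import all_boot all_order all_algebra.
From Stdlib Require Import FunctionalExtensionality.
Set Implicit Arguments. Unset Strict Implicit. Unset Printing Implicit Defensive.
Import Order.TTheory GRing.Theory Num.Theory.
Local Open Scope ring_scope.
Lemma DL0 (R : comNzRingType) (I : finType) (T_ : I -> finType)
  (F : forall i, T_ i -> R) :
  \sum_(t : {dffun forall i, T_ i}) \prod_i F i (t i) =
  \prod_i \sum_(k : T_ i) F i k.
Proof.
rewrite (reindex (@dffun_of_fprod I T_)); last exact/onW_bij/dffun_of_fprod_bij.
transitivity (\sum_(t : fprod T_) \prod_(i in I) [ffun k => F i k] (t i)).
  by apply: eq_bigr => t _; apply: eq_bigr => i _; rewrite !ffunE.
rewrite big_fprod.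
rewrite [RHS](eq_bigr (fun i => \sum_(k in tagged_with T_ i) untag 0 ([ffun k => F i k]) k)); last first.
  move=> i _; rewrite -(big_tag (fun i => [ffun k => F i k])).
  by apply: eq_bigr => k _; rewrite ffunE.
rewrite bigA_distr_big_dep; apply: eq_bigr => g _; apply: eq_bigr => i _.
by [].
Qed.
Lemma sum_mxvec (R : nmodType) m n (f : 'I_(m * n) -> R) :
  \sum_k f k = \sum_(i < m) \sum_(j < n) f (mxvec_index i j).
Proof.
rewrite (reindex _ (curry_mxvec_bij _ _)) /= pair_bigA /=.
by apply: eq_bigr => -[i j].
Qed.

Lemma mxvec_index_eq m n (i i' : 'I_m) (j j' : 'I_n) :
  (mxvec_index i j == mxvec_index i' j') = (i == i') && (j == j').
Proof.
by rewrite /mxvec_index (inj_eq (@cast_ord_inj _ _ _)) (inj_eq enum_rank_inj) xpair_eqE.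
Qed.

Lemma mulmx1C_gen (R : comUnitRingType) m k (M : 'M[R]_(m, k)) (N : 'M[R]_(k, m)) :
  m = k -> M *m N = 1%:M -> N *m M = 1%:M.
Proof. by move=> e; subst m; apply: mulmx1C. Qed.

Lemma local_complete (C : numClosedFieldType) n (Bl : 'I_(n ^ 2) -> 'M[C]_n) :
  (forall i, adjmx (Bl i) = Bl i) ->
  (forall i j, \tr (adjmx (Bl i) *m Bl j) = (i == j)%:R) ->
  forall p q p' q', \sum_i Bl i q p * Bl i p' q' = ((p == p') && (q == q'))%:R.
Proof.
move=> herm orth.
have orth' i j : \tr (Bl i *m Bl j) = (i == j)%:R by rewrite -orth herm.
pose M : 'M[C]_(n ^ 2, n * n) := \matrix_(i, k) mxvec (Bl i) 0 k.
pose N : 'M[C]_(n * n, n ^ 2) := \matrix_(k, j) mxvec (Bl j)^T 0 k.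
have MN : M *m N = 1%:M.
  apply/matrixP => i j; rewrite !mxE -orth' /mxtrace sum_mxvec.
  apply: eq_bigr => a _; rewrite mxE.
  by apply: eq_bigr => b _; rewrite !mxE !mxvecE mxE.
have NM := mulmx1C_gen (esym (mulnn n)) MN.
move=> p q p' q'.
have := congr1 (fun A : 'M_(n*n) => A (mxvec_index p q) (mxvec_index p' q')) NM.
rewrite /= !mxE mxvec_index_eq => <-.
by apply: eq_bigr => i _; rewrite !mxE !mxvecE mxE.
Qed.

Section Main.
Variable C : numClosedFieldType.
Variable N : nat.
Variable d : 'I_N -> nat.
Variable B : forall a : 'I_N, 'I_(d a ^ 2) -> 'M[C]_(d a).
Hypothesis dpos : forall a, (0 < d a)%N.
Hypothesis onb : forall a, local_onb B a.

Lemma prod_indic (P : pred 'I_N) :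
  \prod_a ((P a)%:R : C) = [forall a, P a]%:R.
Proof.
case: (boolP [forall a, P a]) => [/forallP H | /forallPn [a Ha]].
  by rewrite big1 // => a _; rewrite H.
by rewrite (bigD1 a) //= (negbTE Ha) mul0r.
Qed.

Lemma pair_DL (F : forall a, 'I_(d a) -> 'I_(d a) -> C) :
  \sum_(x : cfg d) \sum_(y : cfg d) \prod_a F a (x a) (y a) =
  \prod_a \sum_(p : 'I_(d a)) \sum_(q : 'I_(d a)) F a p q.
Proof.
rewrite (eq_bigr (fun x : cfg d => \prod_a \sum_(q : 'I_(d a)) F a (x a) q)); last first.
  move=> x _; exact: (DL0 (fun a (q : 'I_(d a)) => F a (x a) q)).
exact: (DL0 (fun a p => \sum_(q : 'I_(d a)) F a p q)).
Qed.

Lemma L1 (x y x' y' : cfg d) :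
  \sum_(j : midx d) prodX B j x y * prodX B j x' y' = ((y == x') && (x == y'))%:R.
Proof.
rewrite /prodX; under eq_bigr do rewrite -big_split /=.
rewrite (DL0 (fun a k => B k (x a) (y a) * B k (x' a) (y' a))).
rewrite (eq_bigr (fun a => ((y a == x' a) && (x a == y' a))%:R)); last first.
  move=> a _; have [_ _ herm orth] := onb a.
  exact: (local_complete herm orth (y a) (x a) (x' a) (y' a)).
rewrite (prod_indic (fun a => (y a == x' a) && (x a == y' a))); congr ((nat_of_bool _)%:R).
apply/idP/idP => [/forallP H | /andP [/eqP-> /eqP->]]; last first.
  by apply/forallP => a; rewrite !eqxx.
apply/andP; split; apply/eqP/ffunP => a; case/andP: (H a) => /eqP e1 /eqP e2.
  exact: e1.
exact: e2.
Qed.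

Lemma L2 (M : op C d) x' y' :
  M x' y' = \sum_(j : midx d) trmul (prodX B j) M * prodX B j x' y'.
Proof.
rewrite /trmul.
under eq_bigr do rewrite mulr_suml.
rewrite exchange_big /=.
under eq_bigr do (under eq_bigr do rewrite mulr_suml; rewrite exchange_big /=).
under eq_bigr do (under eq_bigr do (under eq_bigr do rewrite mulrAC; rewrite -mulr_suml L1)).
rewrite (bigD1 y') //= (bigD1 x') //= !eqxx.
rewrite mul1r big1 ?addr0; last by move=> i /negbTE ->; rewrite mul0r.
rewrite big1 ?addr0 // => i /negbTE ne; apply: big1 => j _.
by rewrite ne andbF mul0r.
Qed.


Lemma L3 (i j : midx d) : trmul (prodX B i) (prodX B j) = (i == j)%:R.
Proof.
rewrite /trmul /prodX; under eq_bigr do under eq_bigr do rewrite -big_split /=.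
rewrite (pair_DL (fun a p q => B (i a) p q * B (j a) q p)).
rewrite (eq_bigr (fun a => (i a == j a)%:R)); last first.
  move=> a _; have [_ _ herm orth] := onb a.
  rewrite -(orth (i a) (j a)) herm /mxtrace; apply: eq_bigr => p _.
  by rewrite mxE.
rewrite (prod_indic (fun a => i a == j a)); congr ((nat_of_bool _)%:R).
apply/idP/idP => [/forallP H|/eqP->]; last by apply/forallP.
by apply/eqP/ffunP => a; exact/eqP/H.
Qed.

Lemma L_restr (S : {set 'I_N}) (u : cfg d) (G : forall a, 'I_(d a) -> C) :
  \sum_(z : cfg d | [forall a, (a \in S) ==> (z a == u a)]) \prod_a G a (z a) =
  \prod_a (if a \in S then G a (u a) else \sum_(k : 'I_(d a)) G a k).
Proof.
rewrite big_mkcond /=.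
rewrite (eq_bigr (fun z : cfg d => \prod_a (fun a (k : 'I_(d a)) =>
   if a \in S then (k == u a)%:R * G a k else G a k) a (z a))); last first.
  move=> z _; case: (boolP [forall a, (a \in S) ==> (z a == u a)]) => [/forallP H | /forallPn [a]].
    apply: eq_bigr => a _; case: ifP => aS //.
    by rewrite (eqP (implyP (H a) aS)) eqxx mul1r.
  rewrite negb_imply => /andP [aS ne].
  by rewrite (bigD1 a) //= aS (negbTE ne) /= !mul0r.
rewrite (DL0 (fun a (k : 'I_(d a)) => if a \in S then (k == u a)%:R * G a k else G a k)).
apply: eq_bigr => a _; case: ifP => aS //.
rewrite (bigD1 (u a)) //= eqxx mul1r big1 ?addr0 // => k /negbTE ->.
by rewrite mul0r.
Qed.

Lemma L4 (S : {set 'I_N}) (j : midx d) (u v : cfg d) :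
  reduced S (prodX B j) u v =
  \prod_a (if a \in S then B (j a) (u a) (v a) else \tr (B (j a))).
Proof.
rewrite /reduced /prodX.
rewrite (eq_bigr (fun z : cfg d => \prod_a (fun a (k : 'I_(d a)) =>
   B (j a) (if a \in S then u a else k) (if a \in S then v a else k)) a (z a))); last first.
  by move=> z _; apply: eq_bigr => a _; rewrite /glue !ffunE.
rewrite (L_restr S u (fun a (k : 'I_(d a)) =>
   B (j a) (if a \in S then u a else k) (if a \in S then v a else k))).
apply: eq_bigr => a _; case: ifP => aS; first by rewrite aS.
by rewrite /mxtrace; apply: eq_bigr => k _; rewrite aS.
Qed.

Lemma L5 (S : {set 'I_N}) (M : op C d) (u v : cfg d) :
  reduced S M u v =
  \sum_(j : midx d) trmul (prodX B j) M * reduced S (prodX B j) u v.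
Proof.
rewrite {1}/reduced; under eq_bigr do rewrite (L2 M).
rewrite exchange_big; apply: eq_bigr => j _.
by rewrite /reduced mulr_sumr.
Qed.

Lemma tr0 a (k : 'I_(d a ^ 2)) : val k = 0%N ->
  \tr (B k) = (sqrtC (d a)%:R)^-1 * (d a)%:R.
Proof.
have [h0 _ _ _] := onb a; move=> /h0 ->.
by rewrite mxtraceZ mxtrace1.
Qed.

Lemma tr0_neq0 a : (sqrtC ((d a)%:R : C))^-1 * (d a)%:R != 0.
Proof.
have dn0 : ((d a)%:R : C) != 0 by rewrite pnatr_eq0 -lt0n dpos.
by rewrite mulf_neq0 // invr_eq0 sqrtC_eq0.
Qed.

Lemma trne0 a (k : 'I_(d a ^ 2)) : val k <> 0%N -> \tr (B k) = 0.
Proof. by have [_ h _ _] := onb a; apply: h. Qed.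

Lemma sumall a (k : 'I_(d a ^ 2)) : val k = 0%N ->
  \sum_(p : 'I_(d a)) \sum_(q : 'I_(d a)) B k q p = \tr (B k).
Proof.
move=> k0; rewrite /mxtrace; apply: eq_bigr => p _.
rewrite (bigD1 p) //= big1 ?addr0 // => q qp.
have [h0 _ _ _] := onb a; rewrite (h0 _ k0) !mxE.
by rewrite (negbTE qp) mulr0.
Qed.

Lemma notnb (S : {set 'I_N}) (j : midx d) :
  ~~ in_nb S j -> exists2 a, a \notin S & val (j a) <> 0%N.
Proof.
by rewrite /in_nb => /forallPn [a]; rewrite negb_imply => /andP [aS /eqP h]; exists a.
Qed.

Lemma perS_back (S : {set 'I_N}) (D : op C d) :
  (forall j, in_nb S j -> trmul (prodX B j) D = 0) ->
  forall u v, reduced S D u v = 0.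
Proof.
move=> H u v; rewrite L5 big1 // => j _.
case: (boolP (in_nb S j)) => h; first by rewrite H // mul0r.
have [a aS ja] := notnb h.
by rewrite L4 (bigD1 a) //= (negbTE aS) trne0 // mul0r mulr0.
Qed.

Lemma perS_fwd (S : {set 'I_N}) (D : op C d) :
  (forall u v, reduced S D u v = 0) ->
  forall i, in_nb S i -> trmul (prodX B i) D = 0.
Proof.
move=> H i iS.
have i0 a : a \notin S -> val (i a) = 0%N.
  by move=> aS; apply/eqP; apply: (implyP (forallP iS a)).
have T0 : \sum_(u : cfg d) \sum_(v : cfg d) prodX B i v u * reduced S D u v = 0.
  by apply: big1 => u _; apply: big1 => v _; rewrite H mulr0.
pose W (j : midx d) := \prod_a (if a \in S then (j a == i a)%:R
                                 else \tr (B (i a)) * \tr (B (j a))).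
have E : \sum_(u : cfg d) \sum_(v : cfg d) prodX B i v u * reduced S D u v =
         \sum_j trmul (prodX B j) D * W j.
  transitivity (\sum_j trmul (prodX B j) D *
     \sum_(u : cfg d) \sum_(v : cfg d) prodX B i v u * reduced S (prodX B j) u v).
    under eq_bigr do under eq_bigr do rewrite L5 mulr_sumr.
    under eq_bigr do rewrite exchange_big /=.
    rewrite exchange_big /=; apply: eq_bigr => j _; rewrite mulr_sumr.
    apply: eq_bigr => u _; rewrite mulr_sumr; apply: eq_bigr => v _.
    by rewrite mulrCA.
  apply: eq_bigr => j _; congr (_ * _).
  under eq_bigr do under eq_bigr do rewrite L4 /prodX -big_split /=.
  rewrite (pair_DL (fun a p q => B (i a) q p *
              (if a \in S then B (j a) p q else \tr (B (j a))))).
  apply: eq_bigr => a _; case: ifP => aS.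
    have [_ _ herm orth] := onb a.
    rewrite -orth herm /mxtrace; apply: eq_bigr => p _; rewrite mxE.
    by apply: eq_bigr => q _; rewrite mulrC.
  under eq_bigr do rewrite -mulr_suml.
  by rewrite -mulr_suml sumall // i0 // aS.
have Wi : W i != 0.
  rewrite prodf_seq_neq0; apply/allP => a _ /=; case: ifP => aS.
    by rewrite eqxx oner_neq0.
  by rewrite tr0 ?i0 ?aS // mulf_neq0 // tr0_neq0.
have : trmul (prodX B i) D * W i = 0.
  rewrite -T0 E (bigD1 i) //= big1 ?addr0 // => j ji.
  case: (boolP (in_nb S j)) => h.
    have : ~~ [forall a, j a == i a].
      by apply: contra ji => /forallP hh; apply/eqP/ffunP => a; apply/eqP/hh.
    case/forallPn => a ne.
    case: (boolP (a \in S)) => aS.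
      by rewrite /W (bigD1 a) //= aS (negbTE ne) /= !mul0r mulr0.
    case/negP: ne; apply/eqP/val_inj; rewrite /= i0 //.
    by apply/eqP; apply: (implyP (forallP h a)).
  have [a aS ja] := notnb h.
  by rewrite /W (bigD1 a) //= (negbTE aS) (trne0 ja) mulr0 mul0r mulr0.
by move/eqP; rewrite mulf_eq0 (negbTE Wi) orbF => /eqP.
Qed.

Lemma main (NS : {set {set 'I_N}}) (rho sigma : op C d) :
  (forall S, S \in NS -> reduced S rho = reduced S sigma) <->
  PhiN B NS sigma = PhiN B NS rho.
Proof.
pose D : op C d := fun x y => rho x y - sigma x y.
have trD j : trmul (prodX B j) D = trmul (prodX B j) rho - trmul (prodX B j) sigma.
  rewrite /trmul -sumrB; apply: eq_bigr => x _; rewrite -sumrB.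
  by apply: eq_bigr => y _; rewrite mulrBr.
have redD S u v : reduced S D u v = reduced S rho u v - reduced S sigma u v.
  by rewrite /reduced -sumrB.
have trPhi i M : inXN NS i -> trmul (prodX B i) (PhiN B NS M) = trmul (prodX B i) M.
  move=> iX.
  transitivity (\sum_(j | inXN NS j) trmul (prodX B j) M * trmul (prodX B i) (prodX B j)).
    rewrite [in LHS]/trmul /PhiN.
    under eq_bigr do under eq_bigr do rewrite mulr_sumr.
    under eq_bigr do rewrite exchange_big /=.
    rewrite exchange_big /=; apply: eq_bigr => j _; rewrite /trmul mulr_sumr.
    apply: eq_bigr => x _; rewrite mulr_sumr; apply: eq_bigr => y _.
    by rewrite mulrCA.
  rewrite (bigD1 i) //= L3 eqxx mulr1 big1 ?addr0 // => j /andP [_ ji].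
  by rewrite L3 eq_sym (negbTE ji) mulr0.
split.
  move=> H; apply: functional_extensionality => x.
  apply: functional_extensionality => y.
  rewrite /PhiN; apply: eq_bigr => i /existsP [S /andP [SNS iS]].
  congr (_ * _).
  have := perS_fwd (D := D) _ iS.
  rewrite trD => h; apply/esym/eqP; rewrite -subr_eq0; apply/eqP/h.
  by move=> u v; rewrite redD (H S SNS) subrr.
move=> HP S SNS; apply: functional_extensionality => u.
apply: functional_extensionality => v.
apply/eqP; rewrite -subr_eq0 -redD; apply/eqP; apply: perS_back => j jS.
have XN : inXN NS j by apply/existsP; exists S; rewrite SNS jS.
by rewrite trD -(trPhi j rho XN) -(trPhi j sigma XN) HP subrr.
Qed.

End Main.

Unset Implicit Arguments.
Theorem corollaryV1 (C : numClosedFieldType) (N : nat) (d : 'I_N -> nat)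
  (B : forall a : 'I_N, 'I_(d a ^ 2) -> 'M[C]_(d a))
  (NS : {set {set 'I_N}}) (rho sigma : op C d) :
  (forall a, (0 < d a)%N) ->
  (forall a, local_onb B a) ->
  neighborhood_structure NS -> nontrivial_ns NS ->
  density rho -> density sigma ->
  (forall S, S \in NS -> reduced S rho = reduced S sigma) <->
  PhiN B NS sigma = PhiN B NS rho.
Proof.
by move=> dpos onb _ _ _ _; apply: main.
Qed.
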